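(* Let $D$ be a rad-colon coherent domain. If $\{P_\alpha\}_{\alpha\in A}$ is a chain of prime ideals of $D$ and $P:=\bigcup_\alpha P_\alpha$, then $\bigcap_\alpha D_{P_\alpha}=D_P$.
   Context: An integral domain $D$ with quotient field $K$ is called rad-colon coherent if, for every $x\in K$, the radical of the conductor $(D:_Dx)$ is the radical of a finitely generated ideal. *)

(* Defs.v *)
From HB Require Import structures.
From mathcomp Require Import all_boot all_order all_algebra.
From mathcomp Require Import fraction.
Set Implicit Arguments. Unset Strict Implicit. Unset Printing Implicit Defensive.
Import GRing.Theory.
Local Open Scope ring_scope.

Definition toK (D : idomainType) (d : D) : {fraction D} := @FracField.tofrac D d.

Definition is_ideal (D : idomainType) (I : D -> Prop) : Prop :=
  [/\ I 0, (forall x y, I x -> I y -> I (x + y)) & (forall r x, I x -> I (r * x))].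

Definition is_prime_ideal (D : idomainType) (P : D -> Prop) : Prop :=
  [/\ is_ideal P, ~ P 1 & (forall a b, P (a * b) -> P a \/ P b)].

Definition radical (D : idomainType) (I : D -> Prop) : D -> Prop :=
  fun x => exists n : nat, I (x ^+ n).

Definition gen_ideal (D : idomainType) (s : seq D) : D -> Prop :=
  fun x => exists c : seq D, size c = size s /\
             x = \sum_(i < size s) c`_i * s`_i.

(* The conductor (D :_D x) = { d in D | d x in D } for x in K. *)
Definition conductor (D : idomainType) (x : {fraction D}) : D -> Prop :=
  fun d => exists e : D, toK d * x = toK e.

Definition rad_colon_coherent (D : idomainType) : Prop :=
  forall x : {fraction D}, exists s : seq D,
    forall d : D, radical (conductor x) d <-> radical (gen_ideal s) d.

Definition localization (D : idomainType) (P : D -> Prop) : {fraction D} -> Prop :=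
  fun x => exists a b : D, ~ P b /\ x = toK a / toK b.

(* Main.v *)
Require Import Defs.
From HB Require Import structures.
From mathcomp Require Import all_boot all_order all_algebra.
From mathcomp Require Import fraction.
From Stdlib Require Import Classical.
Local Open Scope ring_scope.
Import GRing.Theory.

Lemma toK_neq0 (D : idomainType) (b : D) : b != 0 -> toK b != 0.
Proof. by rewrite /toK tofrac_eq0. Qed.

Lemma loc_cond (D : idomainType) (Q : D -> Prop) (x : {fraction D}) :
  is_prime_ideal Q ->
  localization Q x <-> exists d, conductor x d /\ ~ Q d.
Proof.
move=> [[Q0 _ _] _ _]; split.
- move=> [a [b [nb ->]]]; exists b; split=> //; exists a.
  have bn0 : b != 0 by apply/negP=> /eqP bz; apply: nb; rewrite bz.
  by rewrite mulrC divfK // toK_neq0.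
- move=> [d [[e He] nd]]; exists e, d; split=> //.
  have dn0 : d != 0 by apply/negP=> /eqP bz; apply: nd; rewrite bz.
  by rewrite -He mulrC mulKf // toK_neq0.
Qed.

Lemma cond_loc (D : idomainType) (Q : D -> Prop) (x : {fraction D}) d :
  Q 0 -> conductor x d -> ~ Q d -> localization Q x.
Proof.
move=> Q0 [e He] nd; exists e, d; split=> //.
have dn0 : d != 0 by apply/negP=> /eqP bz; apply: nd; rewrite bz.
by rewrite -He mulrC mulKf // toK_neq0.
Qed.

Lemma prime_pow (D : idomainType) (Q : D -> Prop) (x : D) (n : nat) :
  is_prime_ideal Q -> Q (x ^+ n) -> Q x.
Proof.
move=> HQ; case: (HQ) => _ n1 pm; elim: n => [|n IH].
- by rewrite expr0 => /n1.
- by rewrite exprS => /pm [].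
Qed.

Lemma gen_ideal_sub (D : idomainType) (Q : D -> Prop) (s : seq D) :
  is_ideal Q -> (forall i, (i < size s)%N -> Q s`_i) ->
  forall d, gen_ideal s d -> Q d.
Proof.
move=> [Q0 QD QM] Hs d [c [_ ->]].
apply: (big_ind Q) => // i _; apply: QM; exact: Hs.
Qed.

Lemma gen_ideal_mem (D : idomainType) (s : seq D) i :
  (i < size s)%N -> gen_ideal s s`_i.
Proof.
move=> hi; exists (mkseq (fun j => (j == i)%:R) (size s)); split.
  by rewrite size_mkseq.
rewrite (bigD1 (Ordinal hi)) //= nth_mkseq // eqxx mul1r big1 ?addr0 //.
move=> j hj; rewrite nth_mkseq //.
have -> : (nat_of_ord j == i) = false.
  by apply/negP=> /eqP e; move/negP: hj; apply; apply/eqP/val_inj.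
by rewrite mul0r.
Qed.

Lemma chain_fin (D : idomainType) (A : Type) (P : A -> D -> Prop) (s : seq D) :
  inhabited A ->
  (forall a b, (forall d, P a d -> P b d) \/ (forall d, P b d -> P a d)) ->
  (forall i, (i < size s)%N -> exists a, P a s`_i) ->
  exists a, forall i, (i < size s)%N -> P a s`_i.
Proof.
move=> [a0] Hch; elim: s => [|y s IH] H.
  by exists a0.
have [a Ha] : exists a, forall i, (i < size s)%N -> P a s`_i.
  by apply: IH => i hi; exact: (H i.+1).
have [b Hb] := H 0%N isT.
case: (Hch a b) => Hab.
- exists b => -[|i] //= hi; exact: Hab (Ha i hi).
- exists a => -[|i] //= hi; [exact: Hab| exact: Ha].
Qed.

Theorem proposition6p9 (D : idomainType) (A : Type) (P : A -> D -> Prop) :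
  rad_colon_coherent D ->
  inhabited A ->
  (forall a, is_prime_ideal (P a)) ->
  (forall a b, (forall d, P a d -> P b d) \/ (forall d, P b d -> P a d)) ->
  forall x : {fraction D},
    (forall a, localization (P a) x) <->
    localization (fun d => exists a, P a d) x.
Proof.
move=> Hrc Hinh HP Hch x; split; last first.
  move=> [a [b [nb ->]]] c; exists a, b; split=> // pb; apply: nb; by exists c.
move=> Hloc; apply: NNPP => Hn.
have [a0] := Hinh.
have Hall : forall d, conductor x d -> exists a, P a d.
  move=> d hd; apply: NNPP => nd; apply: Hn; apply: (@cond_loc _ _ _ d) => //.
  by exists a0; case: (HP a0) => -[].
have [s Hs] := Hrc x.
have [a Ha] : exists a, forall i, (i < size s)%N -> P a s`_i.
  apply: chain_fin => // i hi.
  have [n Hn'] : radical (conductor x) s`_i by apply/Hs; exists 1%N; rewrite expr1; exact: gen_ideal_mem.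
  have [a Ha] := Hall _ Hn'.
  by exists a; exact: prime_pow Ha.
have [b [Hb nb]] := (@loc_cond _ _ x (HP a)).1 (Hloc a).
have [n Hn'] : radical (gen_ideal s) b by apply/Hs; exists 1%N; rewrite expr1.
apply: nb; apply: (@prime_pow _ _ _ n) => //.
apply: (@gen_ideal_sub _ _ s _ Ha _ Hn'); by case: (HP a).
Qed.
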